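(* Let $U$ be a Hilbert space, $H: U\rightrightarrows U$ with $H^{-1}(0)\neq\emptyset$, and for each $i\in\mathbb{N}$ let $\widetilde H_{i+1}: U\rightrightarrows U$ and $M_{i+1}, Z_{i+1}, P_{i+1}\in\mathcal{L}(U;U)$ with $Z_{i+1}M_{i+1}$ self-adjoint and $Z_{i+1}M_{i+1}\ge0$. Let $(u^i)_{i\in\mathbb{N}}\subset U$ satisfy $0\in\widetilde H_{i+1}(u^{i+1}) + M_{i+1}(u^{i+1}-u^i)$ for all $i$. Let $\delta\in[0,1]$ and suppose that for all $i$, $Z_{i+2}M_{i+2}\ge Z_{i+1}P_{i+1}$ and the partial error bound \[ \delta\|u^{i+1}-u^i\|^2_{Z_{i+1}M_{i+1}} + \operatorname{dist}^2_{Z_{i+2}M_{i+2}-Z_{i+1}P_{i+1}}(u^{i+1}, H^{-1}(0)) \ge \operatorname{dist}^2_{Z_{i+2}M_{i+2}}(u^{i+1},H^{-1}(0)) \] holds. Suppose further that for every $i$ there is $\Delta_{i+1}\in\mathbb{R}$ such that for all $u^*\in H^{-1}(0)$ and all $q\in\widetilde H_{i+1}(u^{i+1})$, \[ \tfrac{1-\delta}{2}\|u^{i+1}-u^i\|^2_{Z_{i+1}M_{i+1}} + \tfrac12\|u^{i+1}-u^*\|^2_{Z_{i+1}(M_{i+1}+P_{i+1})-Z_{i+2}M_{i+2}} + \langle q, u^{i+1}-u^*\rangle_{Z_{i+1}} \ge -\Delta_{i+1}. \] Then for all $N\ge1$, \[ \tfrac12 \operatorname{dist}^2_{Z_{N+1}M_{N+1}}(u^N,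 H^{-1}(0)) \le \tfrac12 \operatorname{dist}^2_{Z_1M_1}(u^0, H^{-1}(0)) + \sum_{i=0}^{N-1}\Delta_{i+1}. \]
   Context: For $T\in\mathcal{L}(U;U)$ (bounded linear, not necessarily self-adjoint): $\langle x,z\rangle_T:=\langle Tx,z\rangle$, $\|x\|_T^2:=\langle Tx,x\rangle$, $\operatorname{dist}_T^2(z,A):=\inf_{u\in A}\|z-u\|_T^2$; $T\ge S$ means $T-S$ positive semidefinite. $H^{-1}(0):=\{u: 0\in H(u)\}$. *)

(* Defs.v *)
From HB Require Import structures.
From mathcomp Require Import all_boot all_order all_algebra.
From mathcomp Require Import boolp classical_sets reals.
Set Implicit Arguments. Unset Strict Implicit. Unset Printing Implicit Defensive.
Import Order.TTheory GRing.Theory Num.Theory.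
Local Open Scope ring_scope.
Local Open Scope classical_set_scope.

Section Hilbert.
Variables (R : realType) (U : lmodType R) (ip : U -> U -> R).

Definition ipnorm (x : U) : R := Num.sqrt (ip x x).

Definition is_inner_product : Prop :=
  [/\ (forall x y, ip x y = ip y x),
      (forall a x y z, ip (a *: x + y) z = a * ip x z + ip y z),
      (forall x, 0 <= ip x x) &
      (forall x, ip x x = 0 -> x = 0)].

Definition ip_complete : Prop :=
  forall s : nat -> U,
    (forall e : R, 0 < e -> exists N : nat, forall m n : nat,
        (N <= m)%N -> (N <= n)%N -> ipnorm (s m - s n) < e) ->
    exists l : U, forall e : R, 0 < e -> exists N : nat, forall n : nat,
        (N <= n)%N -> ipnorm (s n - l) < e.

Definition Hilbert : Prop := is_inner_product /\ ip_complete.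

Definition bounded_linear (T : U -> U) : Prop :=
  (forall a x y, T (a *: x + y) = a *: T x + T y) /\
  exists C : R, forall x, ipnorm (T x) <= C * ipnorm x.

Definition self_adjoint (T : U -> U) : Prop := forall x y, ip (T x) y = ip x (T y).

Definition psd (T : U -> U) : Prop := forall x, 0 <= ip (T x) x.

Definition op_ge (T S : U -> U) : Prop := psd (fun x => T x - S x).

Definition ipT (T : U -> U) (x z : U) : R := ip (T x) z.
Definition normT2 (T : U -> U) (x : U) : R := ip (T x) x.

Definition distT2 (T : U -> U) (z : U) (A : set U) : R :=
  inf [set normT2 T (z - v) | v in A].

Definition zeros (H : U -> set U) : set U := [set v | H v 0].

End Hilbert.

Definition opcomp {R : realType} {U : lmodType R} (T S : U -> U) : U -> U :=
  fun x => T (S x).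
Definition opadd {R : realType} {U : lmodType R} (T S : U -> U) : U -> U :=
  fun x => T x + S x.
Definition opsub {R : realType} {U : lmodType R} (T S : U -> U) : U -> U :=
  fun x => T x - S x.

(* Main.v *)
Require Import Defs.
From HB Require Import structures.
From mathcomp Require Import all_boot all_order all_algebra.
From mathcomp Require Import boolp classical_sets reals.
From mathcomp Require Import lra.
Import Order.TTheory GRing.Theory Num.Theory.
Local Open Scope ring_scope.
Module Hlp.
Set Implicit Arguments. Unset Strict Implicit.
Section H.
Variables (R : realType) (U : lmodType R) (ip : U -> U -> R).
Hypothesis hip : is_inner_product ip.

Lemma ipC x y : ip x y = ip y x. Proof. by case: hip. Qed.
Lemma ipZDl a x y z : ip (a *: x + y) z = a * ip x z + ip y z. Proof. by case: hip. Qed.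
Lemma ip0l z : ip 0 z = 0.
Proof. have := ipZDl 1 0 0 z; rewrite scaler0 addr0 mul1r => h; lra. Qed.
Lemma ipDl x y z : ip (x + y) z = ip x z + ip y z.
Proof. by rewrite -[x]scale1r ipZDl mul1r scale1r. Qed.
Lemma ipNl x z : ip (- x) z = - ip x z.
Proof. by rewrite -[- x]addr0 -scaleN1r ipZDl ip0l addr0 mulN1r. Qed.
Lemma ipBl x y z : ip (x - y) z = ip x z - ip y z.
Proof. by rewrite ipDl ipNl. Qed.
Lemma ipBr x y z : ip z (x - y) = ip z x - ip z y.
Proof. by rewrite ipC ipBl ipC [ip y z]ipC. Qed.

Lemma linD (T : U -> U) : (forall a x y, T (a *: x + y) = a *: T x + T y) ->
  forall x y, T (x + y) = T x + T y.
Proof. by move=> h x y; rewrite -[x]scale1r h !scale1r. Qed.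
Lemma lin0 (T : U -> U) : (forall a x y, T (a *: x + y) = a *: T x + T y) -> T 0 = 0.
Proof. move=> h; have := linD h 0 0; rewrite addr0 => e.
by move: e; rewrite -{1}[T 0]addr0 => /addrI. Qed.
Lemma linN (T : U -> U) : (forall a x y, T (a *: x + y) = a *: T x + T y) ->
  forall x, T (- x) = - T x.
Proof. move=> h x; by rewrite -[- x]addr0 -scaleN1r h (lin0 h) addr0 scaleN1r. Qed.
Lemma linB (T : U -> U) : (forall a x y, T (a *: x + y) = a *: T x + T y) ->
  forall x y, T (x - y) = T x - T y.
Proof. by move=> h x y; rewrite (linD h) (linN h). Qed.

End H.
End Hlp.
Import Hlp.
Lemma pointwise (R : realType) (U : lmodType R) (ip : U -> U -> R)
  (hip : is_inner_product ip) (Z M P Z2 M2 : U -> U)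
  (hZ : forall a x y, Z (a *: x + y) = a *: Z x + Z y)
  (hM : forall a x y, M (a *: x + y) = a *: M x + M y)
  (hsa : self_adjoint ip (opcomp Z M)) (delta Delta : R) (x y q : U) :
  q = - M x ->
  (1 - delta) / 2 * normT2 ip (opcomp Z M) x
  + 1 / 2 * normT2 ip (opsub (opcomp Z (opadd M P)) (opcomp Z2 M2)) y
  + ipT ip Z q y >= - Delta ->
  1 / 2 * normT2 ip (opsub (opcomp Z2 M2) (opcomp Z P)) y
  <= 1 / 2 * normT2 ip (opcomp Z M) (y - x) + Delta
     - delta / 2 * normT2 ip (opcomp Z M) x.
Proof.
move=> -> h.
move: h; rewrite /normT2 /ipT /opsub /opcomp /opadd.
rewrite (linN hZ) (linD hZ) (linB hM) (linB hZ).
rewrite !(ipBl hip) !(ipNl hip) !(ipDl hip) !(ipBr hip).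
have e : ip (Z (M y)) x = ip (Z (M x)) y.
  by rewrite (hsa y x) (ipC hip).
rewrite e => h; lra.
Qed.

Theorem corollary3p11 (R : realType) (U : lmodType R) (ip : U -> U -> R)
  (H : U -> set U) (Ht : nat -> U -> set U) (M Z P : nat -> U -> U)
  (u : nat -> U) (delta : R) (Delta : nat -> R) :
  Hilbert ip ->
  (exists v, zeros H v) ->
  (forall i, bounded_linear ip (M i.+1) /\ bounded_linear ip (Z i.+1)
             /\ bounded_linear ip (P i.+1)) ->
  (forall i, self_adjoint ip (opcomp (Z i.+1) (M i.+1)) /\
             psd ip (opcomp (Z i.+1) (M i.+1))) ->
  (forall i, exists q, Ht i.+1 (u i.+1) q /\ q + M i.+1 (u i.+1 - u i) = 0) ->
  0 <= delta <= 1 ->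
  (forall i, op_ge ip (opcomp (Z i.+2) (M i.+2)) (opcomp (Z i.+1) (P i.+1))) ->
  (forall i,
     delta * normT2 ip (opcomp (Z i.+1) (M i.+1)) (u i.+1 - u i)
     + distT2 ip (opsub (opcomp (Z i.+2) (M i.+2)) (opcomp (Z i.+1) (P i.+1)))
              (u i.+1) (zeros H)
     >= distT2 ip (opcomp (Z i.+2) (M i.+2)) (u i.+1) (zeros H)) ->
  (forall i ustar q, zeros H ustar -> Ht i.+1 (u i.+1) q ->
     (1 - delta) / 2 * normT2 ip (opcomp (Z i.+1) (M i.+1)) (u i.+1 - u i)
     + 1 / 2 * normT2 ip
         (opsub (opcomp (Z i.+1) (opadd (M i.+1) (P i.+1))) (opcomp (Z i.+2) (M i.+2)))
         (u i.+1 - ustar)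
     + ipT ip (Z i.+1) q (u i.+1 - ustar)
     >= - Delta i.+1) ->
  forall N : nat, (1 <= N)%N ->
    1 / 2 * distT2 ip (opcomp (Z N.+1) (M N.+1)) (u N) (zeros H)
    <= 1 / 2 * distT2 ip (opcomp (Z 1%N) (M 1%N)) (u 0%N) (zeros H)
       + \sum_(0 <= i < N) Delta i.+1.
Proof.
move=> [hip _] [v0 hv0] hlin hsa hq hd hge heb hD N _.
pose D k := distT2 ip (opcomp (Z k.+1) (M k.+1)) (u k) (zeros H).
have step : forall i, D i.+1 <= D i + 2 * Delta i.+1.
  move=> i.
  have [q [hq1 hq2]] := hq i.
  have [[hM _] [[hZ _] _]] := hlin i.
  have eq : q = - M i.+1 (u i.+1 - u i) by apply/eqP; rewrite -addr_eq0 hq2.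
  have pw : forall c, zeros H c ->
    distT2 ip (opsub (opcomp (Z i.+2) (M i.+2)) (opcomp (Z i.+1) (P i.+1))) (u i.+1) (zeros H)
    - 2 * Delta i.+1 + delta * normT2 ip (opcomp (Z i.+1) (M i.+1)) (u i.+1 - u i)
    <= normT2 ip (opcomp (Z i.+1) (M i.+1)) (u i - c).
    move=> c hc.
    have h := @pointwise _ _ _ hip _ _ (P i.+1) (Z i.+2) (M i.+2) hZ hM (hsa i).1 delta (Delta i.+1) _ _ _ eq (hD i c q hc hq1).
    have e : u i - c = (u i.+1 - c) - (u i.+1 - u i).
      by rewrite opprB [RHS]addrC addrA subrK.
    rewrite e.
    have hinf : distT2 ip (opsub (opcomp (Z i.+2) (M i.+2)) (opcomp (Z i.+1) (P i.+1))) (u i.+1) (zeros H)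
       <= normT2 ip (opsub (opcomp (Z i.+2) (M i.+2)) (opcomp (Z i.+1) (P i.+1))) (u i.+1 - c).
      apply: (ge_inf); last by exists c.
      exists 0 => z [c' _ <-]; exact: hge.
    lra.
  have hT1 : D i + 2 * Delta i.+1 >=
    distT2 ip (opsub (opcomp (Z i.+2) (M i.+2)) (opcomp (Z i.+1) (P i.+1))) (u i.+1) (zeros H)
    + delta * normT2 ip (opcomp (Z i.+1) (M i.+1)) (u i.+1 - u i).
    have : distT2 ip (opsub (opcomp (Z i.+2) (M i.+2)) (opcomp (Z i.+1) (P i.+1))) (u i.+1) (zeros H)
    - 2 * Delta i.+1 + delta * normT2 ip (opcomp (Z i.+1) (M i.+1)) (u i.+1 - u i) <= D i.
      apply: lb_le_inf; first by exists (normT2 ip (opcomp (Z i.+1) (M i.+1)) (u i - v0)), v0.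
      by move=> z [c hc <-]; exact: pw.
    lra.
  have := heb i; rewrite /D; lra.
suff gen : forall n, D n <= D 0%N + 2 * \sum_(0 <= i < n) Delta i.+1.
  have := gen N; rewrite /D; lra.
elim=> [|n IH]; first by rewrite big_geq // mulr0 addr0.
rewrite big_nat_recr //= mulrDr.
have := step n; lra.
Qed.
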